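(* Let $\mathcal F$ be an upper Furstenberg family, written as in the definition of upper family, which satisfies the invariance property: if $F\in\mathcal F_{\delta,m}$ and $k\in\mathbb N$ then $F+k\in\mathcal F_{\delta,m}$. Then $A\in\mathcal F$ if and only if there are $\delta\in D$, numbers $k_m\in\mathbb N$ and finite sets $R_m\in\mathcal F_{\delta,m}$ ($m\in M$) such that $k_m+R_m\subseteq A$ for every $m\in M$.
   Context: $\mathbb N$ denotes the nonnegative integers. A Furstenberg family is hereditarily upward ($A\in\mathcal F$, $A\subseteq B$ imply $B\in\mathcal F$). A Furstenberg family $\mathcal F$ is upper if $\emptyset\notin\mathcal F$ and $\mathcal F=\bigcup_{\delta\in D}\mathcal F_\delta$ with $\mathcal F_\delta=\bigcap_{m\in M}\mathcal F_{\delta,m}$, where $D$ is an arbitrary index set, $M$ is countable, each $\mathcal F_{\delta,m}$ is finitely hereditarily upward (for each $A\in\mathcal F_{\delta,m}$ there is a finite set $F$ such that every $B$ with $F\cap A\subseteq B$ belongs to $\mathcal F_{\delta,m}$), and $\mathcal F$ is uniformly left invariant (for every $A\in\mathcal F$ there is $\delta\in D$ with $A-n:=\{k\in\mathbb N:k+n\in A\}\in\mathcal F_\delta$ for all $n\in\mathbb N$). *)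

(* Defs.v *)
From mathcomp Require Export all_boot.
From mathcomp Require Export boolp classical_sets cardinality.
Set Implicit Arguments. Unset Strict Implicit. Unset Printing Implicit Defensive.
Local Open Scope classical_set_scope.

Definition hered_upward (F : set (set nat)) : Prop :=
  forall A B : set nat, F A -> A `<=` B -> F B.

Definition fin_hered_upward (F : set (set nat)) : Prop :=
  forall A : set nat, F A ->
    exists Fi : set nat, finite_set Fi /\
      forall B : set nat, Fi `&` A `<=` B -> F B.

Definition shiftl (A : set nat) (n : nat) : set nat := [set k | A (k + n)%N].

Definition Fdelta (D M : Type) (Fdm : D -> M -> set (set nat)) (d : D) : set (set nat) :=
  [set A | forall m : M, Fdm d m A].

Definition upper_family_rep (D M : Type) (Fdm : D -> M -> set (set nat))
    (F : set (set nat)) : Prop :=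
  hered_upward F /\
  ~ F set0 /\
  countable [set: M] /\
  (forall d m, fin_hered_upward (Fdm d m)) /\
  (forall A : set nat, F A <-> exists d : D, Fdelta Fdm d A) /\
      (forall A : set nat, F A ->
         exists d : D, forall n : nat, Fdelta Fdm d (shiftl A n)).

(* Main.v *)
Require Import Defs.
From mathcomp Require Import all_boot boolp classical_sets cardinality.
Local Open Scope classical_set_scope.

Theorem mainTheorem7 (D M : Type) (Fdm : D -> M -> set (set nat))
    (F : set (set nat)) :
  upper_family_rep Fdm F ->
  (forall (d : D) (m : M) (S : set nat) (k : nat),
      Fdm d m S -> Fdm d m [set (x + k)%N | x in S]) ->
  forall A : set nat,
    F A <->
    exists (d : D) (k : M -> nat) (R : M -> set nat),
      forall m : M,
        [/\ finite_set (R m), Fdm d m (R m) &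
            [set (k m + x)%N | x in R m] `<=` A].
Proof.
move=> [_ [_ [_ [Hfh [HF _]]]]] Hinv A; split.
- move=> /HF [d Hd].
  have H : forall m, exists Fi : set nat, finite_set Fi /\
      forall B : set nat, Fi `&` A `<=` B -> Fdm d m B.
    by move=> m; apply: Hfh; apply: Hd.
  have [Fi HFi] := choice H.
  exists d, (fun=> 0%N), (fun m => Fi m `&` A) => m; split.
  + exact: finite_setIl (proj1 (HFi m)).
  + by apply: (proj2 (HFi m)).
  + by move=> y [x [_ Ax] <-]; rewrite add0n.
- move=> [d [k [R HR]]]; apply/HF; exists d => m.
  have [_ HRm Hsub] := HR m.
  have H1 := Hinv d m _ (k m) HRm.
  have [Fi [_ HFi]] := Hfh d m _ H1.
  apply: HFi => y [_ [x Rx <-]]; apply: Hsub; exists x => //; by rewrite addnC.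
Qed.
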